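(* Let $C$ be an independent set of the Kneser graph of flags of type $\{2,3\}$ of $\mathrm{PG}(6,q)$ such that every plane and every solid of $\mathrm{PG}(6,q)$ occurs in at most $q+1$ flags of $C$. For a point $P$ let $\Delta_P(C)$ be the set of flags $(E,S)\in C$ with $P\in E$. Let $P_1,P_2,P_3$ be non-collinear points. (i) If $|\Delta_{P_1}(C)|>(q+1)(6q^6+10q^5+17q^4+15q^3+15q^2+9q+5)$, then there are flags $f_i=(E_i,S_i)\in C$, $i\in\{1,2,3\}$, with $\dim\langle E_1,E_2,E_3\rangle\ge 5$, $P_2,P_3\notin S_1,S_2,S_3$, and $E_i\cap E_j=P_1$ and $P_2,P_3\notin\langle E_i,E_j\rangle$ for all distinct $i,j$. (ii) If there are flags $f_1,f_2,f_3$ with the properties in (i) and $|\Delta_{P_2}(C)|>(q+1)(6q^6+10q^5+17q^4+18q^3+15q^2+9q+5)$, then there are flags $f_i'=(E_i',S_i')\in C$, $i\in\{1,2,3\}$, with $\dim\langle E_1',E_2',E_3'\rangle\ge 5$, $P_1,P_3\notin S_1',S_2',S_3'$, $\dim(S_i\cap S_j')\le 1$ for all $i,j\in\{1,2,3\}$, and $E_i'\cap E_j'=P_2$ and $P_1,P_3\notin\langle E_i',E_j'\rangle$ for all distinct $i,j$.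
   Context: Dimensions are projective (points 0, planes 2, solids 3). A flag of type $\{2,3\}$ is a pair $(E,S)$ of a plane $E$ and a solid $S$ with $E\subseteq S$; in the Kneser graph distinct flags $(E,S),(E',S')$ are adjacent iff $E\cap S'=\emptyset$ and $E'\cap S=\emptyset$. $\langle\cdot\rangle$ denotes the span. *)

(* Defs.v *)
From HB Require Import structures.
From mathcomp Require Import all_boot all_order all_algebra all_field.
From mathcomp Require Import finmap.
Set Implicit Arguments. Unset Strict Implicit. Unset Printing Implicit Defensive.
Import GRing.Theory.
Local Open Scope ring_scope.
Local Open Scope fset_scope.

(* PG(6,q) over a finite field F with q = #|F| elements is modelled by the
   lattice of subspaces of the 7-dimensional F-vector space 'rV[F]_7.
   Projective dimension = vector dimension - 1: points have \dim 1,
   lines \dim 2, planes \dim 3, solids \dim 4. *)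
Definition pg6 (F : finFieldType) := 'rV[F]_7.
Definition sub6 (F : finFieldType) := {vspace 'rV[F]_7}.

Definition flag (F : finFieldType) := (sub6 F * sub6 F)%type.

Definition is_point (F : finFieldType) (P : sub6 F) : bool := \dim P == 1%N.

Definition is_flag23 (F : finFieldType) (f : flag F) : bool :=
  [&& \dim f.1 == 3%N, \dim f.2 == 4%N & (f.1 <= f.2)%VS].

Definition kneser_adj (F : finFieldType) (f g : flag F) : bool :=
  [&& f != g, (f.1 :&: g.2)%VS == 0%VS & (g.1 :&: f.2)%VS == 0%VS].

Definition indep_flags (F : finFieldType) (C : {fset flag F}) : Prop :=
  (forall f, f \in C -> is_flag23 f) /\
  (forall f g, f \in C -> g \in C -> ~~ kneser_adj f g).

Definition bounded_mult (F : finFieldType) (C : {fset flag F}) : Prop :=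
  (forall E : sub6 F, (#|` [fset f in C | f.1 == E]| <= #|F|.+1)%N) /\
  (forall S : sub6 F, (#|` [fset f in C | f.2 == S]| <= #|F|.+1)%N).

Definition Delta (F : finFieldType) (P : sub6 F) (C : {fset flag F}) :
  {fset flag F} := [fset f in C | (P <= f.1)%VS].

Definition noncollinear (F : finFieldType) (P1 P2 P3 : sub6 F) : Prop :=
  [/\ is_point P1, is_point P2, is_point P3 & \dim (P1 + P2 + P3)%VS = 3%N].

Definition good_triple (F : finFieldType) (C : {fset flag F})
  (P Q1 Q2 : sub6 F) (f1 f2 f3 : flag F) : Prop :=
  let fs := [:: f1; f2; f3] in
  [/\ [/\ f1 \in C, f2 \in C & f3 \in C],
      (6 <= \dim (f1.1 + f2.1 + f3.1)%VS)%N,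
      (forall f, f \in fs -> ~~ (Q1 <= f.2)%VS /\ ~~ (Q2 <= f.2)%VS) &
      (forall i j : 'I_3, i != j ->
         let Ei := (nth f1 fs i).1 in let Ej := (nth f1 fs j).1 in
         (Ei :&: Ej)%VS = P /\
         ~~ (Q1 <= Ei + Ej)%VS /\ ~~ (Q2 <= Ei + Ej)%VS)].

(* Main.v *)
Require Import Defs.
From HB Require Import structures.
From mathcomp Require Import all_boot all_order all_algebra all_field finmap.
From mathcomp Require Import ring zify.
Import VectorInternalTheory.
HB.instance Definition _ (F : finFieldType) (vT : vectType F) :=
  [Finite of {vspace vT} by <:].

Set Implicit Arguments. Unset Strict Implicit. Unset Printing Implicit Defensive.
Import GRing.Theory.

Section Count.
Variable F : finFieldType.
Local Notation V := 'rV[F]_7.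
Local Notation q := #|F|.
Implicit Types (B U X E W : {vspace V}).

Definition setv (X : {vspace V}) : {set V} := [set v | v \in X].

Lemma card_setv X : #|setv X| = q ^ \dim X.
Proof. by rewrite -card_vspace; apply: eq_card => v; rewrite inE. Qed.

Lemma card_setvD B X : (B <= X)%VS -> #|setv X :\: setv B| = q ^ \dim X - q ^ \dim B.
Proof.
move=> BX; rewrite cardsD -!card_setv; congr (_ - _); apply: eq_card => v.
rewrite !inE; apply/andP/idP => [[]//|vB]; split=> //; exact: (subvP BX).
Qed.

Definition nsub B U k :=
  #|[set X : {vspace V} | [&& (B <= X)%VS, (X <= U)%VS & \dim X == \dim B + k]]|.

Definition prodq a b k := \prod_(i < k) (q ^ a - q ^ (b + i)).

Lemma dcount (T1 T2 : finType) (A : {set T1}) (Bs : {set T2}) (R : T1 -> T2 -> bool) c d :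
  (forall x, x \in A -> #|[set y in Bs | R x y]| = c) ->
  (forall y, y \in Bs -> #|[set x in A | R x y]| = d) ->
  #|A| * c = #|Bs| * d.
Proof.
move=> Hc Hd.
have -> : #|A| * c = \sum_(x in A) \sum_(y in Bs) (R x y : nat).
  rewrite -sum_nat_const; apply: eq_bigr => x xA; rewrite -(Hc x xA).
  by rewrite -sum1dep_card big_mkcondr /= ; apply: eq_bigr => y _; case: (R x y).
rewrite exchange_big /= -sum_nat_const; apply: eq_bigr => y yB; rewrite -(Hd y yB).
by rewrite -sum1dep_card big_mkcondr /= ; apply: eq_bigr => x _; case: (R x y).
Qed.

Lemma dcount_le (T1 T2 : finType) (A : {set T1}) (Bs : {set T2}) (R : T1 -> T2 -> bool) c d :
  (forall x, x \in A -> c <= #|[set y in Bs | R x y]|) ->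
  (forall y, y \in Bs -> #|[set x in A | R x y]| <= d) ->
  #|A| * c <= #|Bs| * d.
Proof.
move=> Hc Hd.
apply: (@leq_trans (\sum_(x in A) \sum_(y in Bs) (R x y : nat))).
  rewrite -sum_nat_const; apply: leq_sum => x xA; apply: leq_trans (Hc x xA) _.
  by rewrite -sum1dep_card big_mkcondr /= ; apply: eq_leq; apply: eq_bigr => y _; case: (R x y).
rewrite exchange_big /= -sum_nat_const; apply: leq_sum => y yB; apply: leq_trans (Hd y yB).
by rewrite -sum1dep_card big_mkcondr /= ; apply: eq_leq; apply: eq_bigr => x _; case: (R x y).
Qed.


Lemma pt_cap B X : \dim X = 1%N -> ~~ (X <= B)%VS -> \dim (B :&: X) = 0%N.
Proof.
move=> dX XB; have: (\dim (B :&: X) <= 1)%N by have := dimvS (capvSr B X); rewrite dX.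
rewrite leq_eqVlt ltnS leqn0 => /orP[/eqP d1|/eqP //].
have : (B :&: X == X)%VS by rewrite eqEdim capvSr d1 dX.
by move/eqP=> e; move: XB; rewrite -e capvSl.
Qed.

Lemma pt_sum B X : \dim X = 1%N -> ~~ (X <= B)%VS -> \dim (B + X) = (\dim B).+1.
Proof.
move=> dX XB; have := dimv_sum_cap B X; rewrite pt_cap // dX addn0 addn1.
done.
Qed.

Lemma dim_vline1 (v : V) : v != 0%R -> \dim <[v]> = 1%N.
Proof. by move=> nz; rewrite dim_vline nz. Qed.

Lemma vline_sum B (v : V) : v \notin B -> \dim (B + <[v]>) = (\dim B).+1.
Proof.
move=> vB; have nz : v != 0%R by apply: contraNneq vB => ->; rewrite mem0v.
by apply: pt_sum; [exact: dim_vline1 | rewrite -memvE].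
Qed.

Lemma nsub_eq k : forall B U, (B <= U)%VS -> (\dim B + k <= \dim U)%N ->
  nsub B U k * prodq (\dim B + k) (\dim B) k = prodq (\dim U) (\dim B) k.
Proof.
elim: k => [|k IH] B U BU hk.
  rewrite /prodq !big_ord0 muln1 /nsub.
  rewrite (_ : [set X | _] = [set B]) ?cards1 //; apply/setP => X.
  rewrite !inE addn0; apply/idP/eqP => [/and3P[BX _ dX]|->]; last by rewrite BU eqxx subvv.
  by apply/esym/eqP; rewrite (eqEdim B X) BX (eqP dX) leqnn.
set b := \dim B; set u := \dim U.
have qgt0 : (0 < q)%N by apply/card_gt0P; exists 0%R.
have q1 : (1 < q)%N by exact: finNzRing_gt1.
pose S := [set X : {vspace V} | [&& (B <= X)%VS, (X <= U)%VS & \dim X == b + k.+1]].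
pose Bs := setv U :\: setv B.
pose c' := prodq (b.+1 + k) (b.+1) k.
pose M := prodq u (b.+1) k.
have c'gt0 : (0 < c')%N.
  rewrite /c' /prodq; apply/prodn_gt0 => i; rewrite subn_gt0 ltn_exp2l //.
  by rewrite -addnS leq_add2l.
have HIH : forall v, v \in Bs -> nsub (B + <[v]>) U k * c' = M /\
   #|[set X in S | v \in X]| = nsub (B + <[v]>) U k.
  move=> v; rewrite !inE => /andP[vB vU].
  have Bv : (B + <[v]> <= U)%VS by rewrite subv_add BU -memvE.
  have dBv := vline_sum vB.
  have hk' : (\dim B + k < \dim U)%N by rewrite -addnS.
  have := IH (B + <[v]>)%VS U Bv; rewrite dBv addSn => /(_ hk') E.
  rewrite -addSn in E; split; first exact: E.
  rewrite /nsub; apply: eq_card => X.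
  rewrite !inE dBv addSn addnS subv_add -memvE.
  by case: (v \in X); rewrite ?andbF ?andbT.
have Hv : forall v, v \in Bs -> #|[set X in S | v \in X]| = M %/ c'.
  by move=> v /HIH[<- ->]; rewrite mulnK.
have dvd : (c' %| M)%N.
  have : (0 < #|Bs|)%N.
    rewrite card_setvD // subn_gt0 ltn_exp2l //.
    apply: leq_trans hk; rewrite addnS ltnS leq_addr //.
  by case/card_gt0P => v /HIH[<- _]; rewrite dvdn_mull.
have Hx : forall X, X \in S -> #|[set v in Bs | v \in X]| = q ^ (b + k.+1) - q ^ b.
  move=> X; rewrite inE => /and3P[BX XU /eqP dX].
  rewrite -dX -card_setvD //; apply: eq_card => v; rewrite !inE.
  case vX: (v \in X); rewrite ?andbF ?andbT //=.
  by rewrite (subvP XU) // andbT.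
have := dcount Hx Hv; rewrite card_setvD // -/u.
rewrite /prodq big_ord_recl /= addn0 -/(nsub B U k.+1).
move=> E.
rewrite big_ord_recl /= addn0.
have -> : \prod_(i < k) (q ^ u - q ^ (b + bump 0 i)) = M.
  by apply: eq_bigr => i _; rewrite /bump /= add1n addnS addSn.
have -> : \prod_(i < k) (q ^ (b + k.+1) - q ^ (b + bump 0 i)) = c'.
  by apply: eq_bigr => i _; rewrite /bump /= add1n addnS addSn addnS addSn.
by rewrite mulnA E -mulnA divnK.
Qed.


Lemma nat_int_eq (a b : nat) : (a%:R = b%:R :> int)%R -> a = b.
Proof. by move/eqP; rewrite Num.Theory.eqr_nat => /eqP. Qed.

Lemma q_gt1 : (1 < q)%N. Proof. exact: finNzRing_gt1. Qed.
Lemma q_gt0 : (0 < q)%N. Proof. exact: ltnW q_gt1. Qed.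

Lemma expB a b : (b <= a)%N -> ((q ^ a - q ^ b)%:R = (q%:R ^+ a - q%:R ^+ b :> int))%R.
Proof. by move=> ba; rewrite natrB ?leq_pexp2l ?q_gt0 // !natrX. Qed.

Lemma nsub_val B U k r : (B <= U)%VS -> (\dim B + k <= \dim U)%N ->
  prodq (\dim U) (\dim B) k = r * prodq (\dim B + k) (\dim B) k -> nsub B U k = r.
Proof.
move=> BU hk e; have := nsub_eq BU hk; rewrite e => /eqP; rewrite eqn_pmul2r //.
  by move/eqP.
rewrite /prodq; apply/prodn_gt0 => i; rewrite subn_gt0 ltn_exp2l ?q_gt1 //.
by rewrite ltn_add2l.
Qed.

Lemma dimV7 : \dim (fullv : {vspace V}) = 7%N.
Proof. by rewrite dimvf /dim /=. Qed.

Lemma nsub_val' B U k b u a r : (B <= U)%VS -> \dim B = b -> \dim U = u -> a = (b + k)%N ->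
  (a <= u)%N -> prodq u b k = r * prodq a b k -> nsub B U k = r.
Proof. by move=> BU <- <- -> hk; apply: nsub_val. Qed.

Lemma prodq1 a b : prodq a b 1 = q ^ a - q ^ b.
Proof. by rewrite /prodq big_ord_recl big_ord0 /= addn0 muln1. Qed.
Lemma prodq2 a b : prodq a b 2 = (q ^ a - q ^ b) * (q ^ a - q ^ b.+1).
Proof. by rewrite /prodq !big_ord_recl big_ord0 /= /bump /= addn0 addn1 muln1. Qed.
Lemma prodq3 a b : prodq a b 3 = (q ^ a - q ^ b) * (q ^ a - q ^ b.+1) * (q ^ a - q ^ b.+2).
Proof.
by rewrite /prodq !big_ord_recl big_ord0 /= /bump /= addn0 addn1 muln1 !add1n addn2 mulnA.
Qed.

Ltac qcalc := rewrite ?prodq1 ?prodq2 ?prodq3;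
  apply: nat_int_eq; rewrite ?natrM ?natrD !expB //; ring.

Lemma nsubA L : \dim L = 2%N -> nsub L fullv 2 = (q^6+q^5+2*q^4+2*q^3+2*q^2+q+1)%N.
Proof. by move=> dL; apply: (nsub_val' (a:=4)) dL dimV7 _ _ _; rewrite ?subvf //; qcalc. Qed.

Lemma nsubL1 L : \dim L = 2%N -> nsub L fullv 1 = (q^4+q^3+q^2+q+1)%N.
Proof. by move=> dL; apply: (nsub_val' (a:=3)) dL dimV7 _ _ _; rewrite ?subvf //; qcalc. Qed.

Lemma nsubLW L W : (L <= W)%VS -> \dim L = 2%N -> \dim W = 4%N -> nsub L W 1 = (q+1)%N.
Proof. by move=> LW dL dW; apply: (nsub_val' (a:=3)) dL dW _ _ _; rewrite ?subvf //; qcalc. Qed.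

Lemma nsubPW P W : (P <= W)%VS -> \dim P = 1%N -> \dim W = 4%N -> nsub P W 2 = (q^2+q+1)%N.
Proof. by move=> LW dL dW; apply: (nsub_val' (a:=3)) dL dW _ _ _; rewrite ?subvf //; qcalc. Qed.

Lemma nsubD P U : (P <= U)%VS -> \dim P = 1%N -> \dim U = 5%N -> nsub P U 2 = ((q^2+1)*(q^2+q+1))%N.
Proof. by move=> LW dL dW; apply: (nsub_val' (a:=3)) dL dW _ _ _; rewrite ?subvf //; qcalc. Qed.

Lemma nsubG P U : (P <= U)%VS -> \dim P = 1%N -> \dim U = 5%N -> nsub P U 3 = (q^3+q^2+q+1)%N.
Proof. by move=> LW dL dW; apply: (nsub_val' (a:=4)) dL dW _ _ _; rewrite ?subvf //; qcalc. Qed.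


Definition Sset B U k :=
  [set X : {vspace V} | [&& (B <= X)%VS, (X <= U)%VS & \dim X == \dim B + k]].

Definition Bset P W :=
  [set E : {vspace V} | [&& (P <= E)%VS, \dim E == 3%N & (2 <= \dim (E :&: W))%N]].

Lemma nat_int_le (a b : nat) : (a%:R <= b%:R :> int)%R -> (a <= b)%N.
Proof. by rewrite Num.Theory.ler_nat. Qed.

Lemma card_Bset P W : (P <= W)%VS -> \dim P = 1%N -> \dim W = 4%N ->
  (#|Bset P W| <= q^6+2*q^5+3*q^4+2*q^3+2*q^2+q+1)%N.
Proof.
move=> PW dP dW.
pose Bl := [set E : {vspace V} | [&& (P <= E)%VS, \dim E == 3%N, ~~ (E <= W)%VS
   & (2 <= \dim (E :&: W))%N]].
have sub : Bset P W \subset Sset P W 2 :|: Bl.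
  apply/subsetP => E; rewrite /Bset /Sset !inE => /and3P[PE dE dEW].
  case EW: (E <= W)%VS; last by rewrite PE dE dEW orbT.
  by rewrite PE dP (eqP dE).
apply: leq_trans (subset_leq_card sub) _; apply: leq_trans (leq_card_setU _ _) _.
have -> : #|Sset P W 2| = (q^2+q+1)%N by rewrite -(nsubPW PW dP dW).
pose Bs := setv W :\: setv P.
have HE : forall E, E \in Bl -> (q ^ 2 - q ^ 1 <= #|[set v in Bs | v \in E]|)%N.
  move=> E; rewrite inE => /and4P[PE /eqP dE nEW dEW].
  have dEW2 : \dim (E :&: W) = 2%N.
    have le3 := dimvS (capvSl E W); rewrite dE leq_eqVlt ltnS in le3.
    case/orP: le3 => [/eqP h|h]; last by apply/eqP; rewrite eqn_leq h dEW.
    have : (E :&: W == E)%VS by rewrite eqEdim capvSl h dE.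
    by move/eqP=> e; move: nEW; rewrite -e capvSr.
  have PEW : (P <= E :&: W)%VS by rewrite subv_cap PE PW.
  have := card_setvD PEW; rewrite dEW2 dP => <-; apply: eq_leq; apply: eq_card => v.
  by rewrite !inE memv_cap; case: (v \in P); rewrite ?andbF //= andbC.
have Hv : forall v, v \in Bs -> (#|[set E in Bl | v \in E]| <= q^4+q^3+q^2)%N.
  move=> v; rewrite !inE => /andP[vP vW].
  set L := (P + <[v]>)%VS.
  have dL : \dim L = 2%N by rewrite /L vline_sum // dP.
  have LW : (L <= W)%VS by rewrite /L subv_add PW -memvE.
  have s1 : [set E in Bl | v \in E] \subset Sset L fullv 1 :\: Sset L W 1.
    apply/subsetP => E; rewrite /Sset !inE => /andP[/and4P[PE dE nEW _] vE].
    by rewrite subv_add PE -memvE vE subvf dL (eqP dE) addn1 eqxx !andbT.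
  apply: leq_trans (subset_leq_card s1) _.
  have s2 : Sset L W 1 \subset Sset L fullv 1.
    by apply/subsetP => E; rewrite /Sset !inE subvf => /and3P[-> _ ->].
  rewrite cardsD (setIidPr s2) -/(nsub L fullv 1) -/(nsub L W 1).
  rewrite nsubL1 // nsubLW //.
  have -> : (q^4+q^3+q^2+q+1 = (q^4+q^3+q^2) + (q+1))%N by rewrite !addnA.
  by rewrite addnK.
have := dcount_le HE Hv; rewrite card_setvD // dW dP => H.
have : (#|Bl| * (q ^ 2 - q ^ 1) <= ((q^2+q+1)*(q^4+q^3+q^2)) * (q ^ 2 - q ^ 1))%N.
  apply: leq_trans H _; apply: eq_leq; apply: nat_int_eq.
  rewrite ?natrM ?natrD !expB //; ring.
rewrite leq_pmul2r; last by rewrite subn_gt0 ltn_exp2l ?q_gt1.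
move=> hB; rewrite -(leq_add2l (q^2+q+1)) in hB; apply: leq_trans hB _.
apply: eq_leq; apply: nat_int_eq; rewrite ?natrM ?natrD; ring.
Qed.


Lemma card_fset_fin (T : finType) (A : {fset T}) : #|` A| = #|[set x | x \in A]|.
Proof. by rewrite cardsE -(card_uniqP (fset_uniq A)); apply: eq_card => x. Qed.

Lemma fiber_le (C : {fset flag F}) (BE : {set {vspace V}}) (g : flag F -> {vspace V}) :
  (forall E, #|[set f | (f \in C) && (g f == E)]| <= q.+1)%N ->
  (#|[set f | (f \in C) && (g f \in BE)]| <= #|BE| * q.+1)%N.
Proof.
move=> hb; rewrite -[X in (X <= _)%N]muln1.
apply: (@dcount_le _ _ _ _ (fun f E => g f == E)) => [f|E EB].
  rewrite inE => /andP[_ gB]; apply/card_gt0P; exists (g f); by rewrite !inE gB eqxx.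
apply: leq_trans (hb E); apply: subset_leq_card; apply/subsetP => f.
by rewrite !inE => /andP[/andP[-> _] ->].
Qed.

Lemma pick_flag (C : {fset flag F}) P (BE BS : {set {vspace V}}) :
  bounded_mult C -> ((q.+1) * (#|BE| + #|BS|) < #|` Delta P C|)%N ->
  exists f, [/\ f \in C, (P <= f.1)%VS, f.1 \notin BE & f.2 \notin BS].
Proof.
case=> hE hS hlt.
pose D := [set f : flag F | f \in Delta P C].
have cD : #|` Delta P C| = #|D| by rewrite card_fset_fin.
case: (boolP [exists f in D, (f.1 \notin BE) && (f.2 \notin BS)]).
  case/exists_inP => f; rewrite /D /Delta !inE => /andP[fC PE] /andP[h1 h2].
  by exists f; split.
move/exists_inPn => H; exfalso.
have sub : D \subset [set f | (f \in C) && (f.1 \in BE)] :|: [set f | (f \in C) && (f.2 \in BS)].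
  apply/subsetP => f fD; have := H f fD; move: fD; rewrite /D /Delta !inE => /andP[-> _].
  by rewrite negb_and !negbK.
have c1 : (#|[set f | (f \in C) && (f.1 \in BE)]| <= #|BE| * q.+1)%N.
  apply: fiber_le => E; apply: leq_trans (hE E); rewrite card_fset_fin.
  by apply: eq_leq; apply: eq_card => f; rewrite !inE.
have c2 : (#|[set f | (f \in C) && (f.2 \in BS)]| <= #|BS| * q.+1)%N.
  apply: fiber_le => E; apply: leq_trans (hS E); rewrite card_fset_fin.
  by apply: eq_leq; apply: eq_card => f; rewrite !inE.
have := leq_trans (subset_leq_card sub) (leq_card_setU _ _).
move=> h; have := leq_trans h (leq_add c1 c2).
by rewrite -mulnDl mulnC -cD leqNgt hlt.
Qed.


Lemma plane_good P Q E1 E : \dim E1 = 3%N -> \dim E = 3%N -> \dim P = 1%N -> \dim Q = 1%N ->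
  (P <= E1)%VS -> (P <= E)%VS -> ~~ (Q <= E1)%VS -> E \notin Bset P (E1 + Q) ->
  (E1 :&: E)%VS = P /\ ~~ (Q <= E1 + E)%VS.
Proof.
move=> d1 dE dP dQ PE1 PE QE1; rewrite /Bset inE PE dE eqxx /= -ltnNge ltnS => hW.
have dW : \dim (E1 + Q) = 4%N by rewrite pt_sum // d1.
have hcap : (E1 :&: E)%VS = P.
  apply/eqP; rewrite eq_sym eqEdim subv_cap PE1 PE /= dP.
  apply: leq_trans hW; apply: dimvS; rewrite capvC; apply: capvS => //; exact: addvSl.
split=> //; apply/negP => QE.
have d5 : \dim (E1 + E) = 5%N.
  by have := dimv_sum_cap E1 E; rewrite hcap d1 dE dP addn1 => /eqP; rewrite eqSS => /eqP.
have WE : (E1 + Q <= E1 + E)%VS by rewrite subv_add addvSl QE.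
have : (\dim (E + (E1 + Q)) <= 5)%N.
  by have := dimvS (_ : (E + (E1 + Q) <= E1 + E)%VS); rewrite d5; apply; rewrite subv_add addvSr WE.
have := dimv_sum_cap E (E1 + Q); rewrite dE dW => e.
move=> h; lia.
Qed.

Lemma solid_good P Q S : (P <= S)%VS -> \dim S = 4%N -> \dim (P + Q) = 2%N ->
  S \notin Sset (P + Q) fullv 2 -> ~~ (Q <= S)%VS.
Proof.
move=> PS dS dPQ; rewrite /Sset inE subvf dPQ dS /= andbT; apply: contra => QS.
by rewrite subv_add PS QS.
Qed.

Lemma sum_gt U E : ~~ (E <= U)%VS -> (\dim U < \dim (U + E))%N.
Proof.
move=> EU; rewrite ltnNge; apply: contra EU => h.
have : (U + E == U)%VS by rewrite eq_sym eqEdim addvSl h.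
by move/eqP => <-; rewrite addvSr.
Qed.

Lemma dim_good P E1 E2 E3 : \dim E1 = 3%N -> \dim E2 = 3%N -> \dim P = 1%N ->
  (E1 :&: E2)%VS = P -> (P <= E3)%VS -> \dim E3 = 3%N ->
  E3 \notin Sset P (E1 + E2) 2 -> (6 <= \dim (E1 + E2 + E3))%N.
Proof.
move=> d1 d2 dP hc PE3 d3; rewrite /Sset inE PE3 d3 dP /= andbT => h.
have d5 : \dim (E1 + E2) = 5%N.
  by have := dimv_sum_cap E1 E2; rewrite hc d1 d2 dP addn1 => /eqP; rewrite eqSS => /eqP.
by have := sum_gt h; rewrite d5.
Qed.

Lemma G_good P2 S S' : \dim P2 = 1%N -> ~~ (P2 <= S)%VS -> \dim S = 4%N ->
  (P2 <= S')%VS -> \dim S' = 4%N -> S' \notin Sset P2 (S + P2) 3 ->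
  (\dim (S :&: S') <= 2)%N.
Proof.
move=> dP nPS dS PS' dS'; rewrite /Sset inE PS' dS' dP /= andbT => h.
rewrite leqNgt; apply: contra h => h3.
have nP : ~~ (P2 <= S :&: S')%VS by apply: contra nPS => /subvP hh; apply/subvP => x /hh; rewrite memv_cap => /andP[].
have e := pt_sum dP nP.
have sub : ((S :&: S') + P2 <= S')%VS by rewrite subv_add capvSr PS'.
have : ((S :&: S') + P2 == S')%VS by rewrite eqEdim sub e dS'.
by move/eqP <-; apply: addvS => //; exact: capvSl.
Qed.


Definition nA := (q^6+q^5+2*q^4+2*q^3+2*q^2+q+1)%N.
Definition nB := (q^6+2*q^5+3*q^4+2*q^3+2*q^2+q+1)%N.
Definition nD := ((q^2+1)*(q^2+q+1))%N.

Lemma dim_pair (P Q R : {vspace V}) : \dim P = 1%N -> \dim Q = 1%N -> \dim R = 1%N ->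
  \dim (P + Q + R) = 3%N -> \dim (P + Q) = 2%N.
Proof.
move=> dP dQ dR d3.
have h1 := dimv_sum_cap P Q; have h2 := dimv_sum_cap (P + Q) R.
have h3 := dimvS (capvSr (P + Q) R).
rewrite dP dQ in h1; rewrite dR d3 in h2; rewrite dR in h3; lia.
Qed.

Lemma ar1 x y b d : (x + y <= b + b -> x + y <= 4 * b + d)%N.
Proof. lia. Qed.
Lemma ar2 x1 x2 x3 x4 b d : (x1 <= b -> x2 <= b -> x3 <= b -> x4 <= b ->
  x1 + x2 + x3 + x4 + d <= 4 * b + d)%N.
Proof. lia. Qed.
Lemma ar3 a : (a + 1 = 3 + 3 -> a = 5)%N.
Proof. lia. Qed.
Lemma ar4 a b c x N : (2 * a + 4 * b + c + x <= N -> 4 * b + c + (2 * a + x) <= N)%N.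
Proof. lia. Qed.

Definition pgood P Q1 Q2 (A B : {vspace V}) :=
  (A :&: B)%VS = P /\ ~~ (Q1 <= A + B)%VS /\ ~~ (Q2 <= A + B)%VS.

Lemma pgoodC P Q1 Q2 A B : pgood P Q1 Q2 A B -> pgood P Q1 Q2 B A.
Proof. by rewrite /pgood capvC addvC. Qed.

Lemma core (C : {fset flag F}) (P Q1 Q2 : {vspace V}) (X : {set {vspace V}}) N :
  indep_flags C -> bounded_mult C ->
  \dim P = 1%N -> \dim Q1 = 1%N -> \dim Q2 = 1%N -> \dim (P + Q1 + Q2) = 3%N ->
  (2 * nA + 4 * nB + nD + #|X| <= N)%N -> ((q.+1) * N < #|` Delta P C|)%N ->
  exists g1 g2 g3, good_triple C P Q1 Q2 g1 g2 g3 /\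
    (forall g, g \in [:: g1; g2; g3] -> g.2 \notin X /\ (P <= g.1)%VS).
Proof.
move=> [hflag _] hbm dP dQ1 dQ2 d3 hN hD.
have dPQ1 : \dim (P + Q1) = 2%N by apply: dim_pair d3.
have dPQ2 : \dim (P + Q2) = 2%N.
  by apply: (dim_pair dP dQ2 dQ1); rewrite -addvA (addvC Q2) addvA.
pose BS := Sset (P + Q1) fullv 2 :|: Sset (P + Q2) fullv 2 :|: X.
have cBS : (#|BS| <= 2 * nA + #|X|)%N.
  apply: leq_trans (leq_card_setU _ _) _; rewrite leq_add2r.
  apply: leq_trans (leq_card_setU _ _) _.
  have e1 : #|Sset (P + Q1) fullv 2| = nA := nsubA dPQ1.
  have e2 : #|Sset (P + Q2) fullv 2| = nA := nsubA dPQ2.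
  by rewrite e1 e2 addnn mul2n.
have pickN : forall BE : {set {vspace V}}, (#|BE| <= 4 * nB + nD)%N ->
    exists f, [/\ f \in C, (P <= f.1)%VS, f.1 \notin BE & f.2 \notin BS].
  move=> BE hBE; apply: pick_flag => //; apply: leq_ltn_trans hD.
  rewrite leq_mul2l; apply: leq_trans hN.
  apply: leq_trans (leq_add hBE cBS) _; exact: ar4.
have fprops : forall f, f \in C -> (P <= f.1)%VS -> f.2 \notin BS ->
   [/\ \dim f.1 = 3%N, \dim f.2 = 4%N, ~~ (Q1 <= f.2)%VS, ~~ (Q2 <= f.2)%VS &
       f.2 \notin X].
  move=> f fC PE; rewrite !inE !negb_or => /andP[/andP[h1 h2] h3].
  have /and3P[/eqP d1 /eqP d2 ES] := hflag f fC.
  have PS : (P <= f.2)%VS by apply: subv_trans ES.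
  split=> //; [apply: (solid_good PS d2 dPQ1) | apply: (solid_good PS d2 dPQ2)]; by rewrite /Sset inE.
have [f1 [f1C PE1 _ S1B]] : exists f, [/\ f \in C, (P <= f.1)%VS, f.1 \notin set0 & f.2 \notin BS].
  by apply: pickN; rewrite cards0.
have [d11 d12 nQ11 nQ21 nX1] := fprops f1 f1C PE1 S1B.
have /and3P[_ _ ES1] := hflag f1 f1C.
have nQ1E1 : ~~ (Q1 <= f1.1)%VS by apply: contra nQ11 => h; apply: subv_trans ES1.
have nQ2E1 : ~~ (Q2 <= f1.1)%VS by apply: contra nQ21 => h; apply: subv_trans ES1.
have cB : forall E Q, \dim E = 3%N -> (P <= E)%VS -> \dim Q = 1%N -> ~~ (Q <= E)%VS ->
    (#|Bset P (E + Q)| <= nB)%N.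
  move=> E Q dE PE dQ nQE; apply: card_Bset => //.
    by apply: subv_trans PE (addvSl _ _).
  by rewrite pt_sum // dE.
pose BE2 := Bset P (f1.1 + Q1) :|: Bset P (f1.1 + Q2).
have [f2 [f2C PE2 E2B S2B]] : exists f, [/\ f \in C, (P <= f.1)%VS, f.1 \notin BE2 & f.2 \notin BS].
  apply: pickN; apply: leq_trans (leq_card_setU _ _) _.
  have := leq_add (cB _ _ d11 PE1 dQ1 nQ1E1) (cB _ _ d11 PE1 dQ2 nQ2E1)=> hh; exact: ar1 hh.
have [d21 d22 nQ12 nQ22 nX2] := fprops f2 f2C PE2 S2B.
have /and3P[_ _ ES2] := hflag f2 f2C.
have nQ1E2 : ~~ (Q1 <= f2.1)%VS by apply: contra nQ12 => h; apply: subv_trans ES2.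
have nQ2E2 : ~~ (Q2 <= f2.1)%VS by apply: contra nQ22 => h; apply: subv_trans ES2.
move: E2B; rewrite /BE2 in_setU negb_or => /andP[E2B1 E2B2].
have [c12 g121] := plane_good d11 d21 dP dQ1 PE1 PE2 nQ1E1 E2B1.
have [_ g122] := plane_good d11 d21 dP dQ2 PE1 PE2 nQ2E1 E2B2.
have PU : (P <= f1.1 + f2.1)%VS by apply: subv_trans PE1 (addvSl _ _).
have dU : \dim (f1.1 + f2.1) = 5%N.
  by have := dimv_sum_cap f1.1 f2.1; rewrite c12 d11 d21 dP; exact: ar3.
pose BE3 := BE2 :|: Bset P (f2.1 + Q1) :|: Bset P (f2.1 + Q2) :|: Sset P (f1.1 + f2.1) 2.
have [f3 [f3C PE3 E3B S3B]] : exists f, [/\ f \in C, (P <= f.1)%VS, f.1 \notin BE3 & f.2 \notin BS].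
  apply: pickN.
  have eD : #|Sset P (f1.1 + f2.1) 2| = nD := nsubD PU dP dU.
  apply: leq_trans (leq_card_setU _ _) _; rewrite eD.
  apply: leq_trans (leq_add (leq_card_setU _ _) (leqnn _)) _.
  apply: leq_trans (leq_add (leq_add (leq_card_setU _ _) (leqnn _)) (leqnn _)) _.
  apply: leq_trans (leq_add (leq_add (leq_add (leq_card_setU _ _) (leqnn _)) (leqnn _)) (leqnn _)) _.
  apply: ar2; [exact: (cB _ _ d11 PE1 dQ1 nQ1E1) | exact: (cB _ _ d11 PE1 dQ2 nQ2E1)
    | exact: (cB _ _ d21 PE2 dQ1 nQ1E2) | exact: (cB _ _ d21 PE2 dQ2 nQ2E2)].
have [d31 d32 nQ13 nQ23 nX3] := fprops f3 f3C PE3 S3B.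
move: E3B; rewrite /BE3 /BE2 !in_setU !negb_or => /andP[/andP[/andP[/andP[E3B1 E3B2] E3B3] E3B4] E3B5].
have [c13 g131] := plane_good d11 d31 dP dQ1 PE1 PE3 nQ1E1 E3B1.
have [_ g132] := plane_good d11 d31 dP dQ2 PE1 PE3 nQ2E1 E3B2.
have [c23 g231] := plane_good d21 d31 dP dQ1 PE2 PE3 nQ1E2 E3B3.
have [_ g232] := plane_good d21 d31 dP dQ2 PE2 PE3 nQ2E2 E3B4.
have H12 : pgood P Q1 Q2 f1.1 f2.1 by [].
have H13 : pgood P Q1 Q2 f1.1 f3.1 by [].
have H23 : pgood P Q1 Q2 f2.1 f3.1 by [].
have H21 := pgoodC H12; have H31 := pgoodC H13; have H32 := pgoodC H23.
have d6 : (6 <= \dim (f1.1 + f2.1 + f3.1))%N.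
  apply: (dim_good d11 d21 dP c12 PE3 d31).
  exact: E3B5.
exists f1, f2, f3; split.
  split=> //.
    by move=> f; rewrite !inE => /or3P[] /eqP ->; split.
  move=> i j; case: i => [[|[|[|i]]] Hi]; case: j => [[|[|[|j]]] Hj] //= _.
by move=> g; rewrite !inE => /or3P[] /eqP ->; split.
Qed.

End Count.

Lemma num1 (q : nat) : (0 < q)%N ->
  (2 * (q^6+q^5+2*q^4+2*q^3+2*q^2+q+1) + 4 * (q^6+2*q^5+3*q^4+2*q^3+2*q^2+q+1)
   + (q^2+1)*(q^2+q+1) + 0 <= 6 * q ^ 6 + 10 * q ^ 5 + 17 * q ^ 4 + 15 * q ^ 3 + 15 * q ^ 2
              + 9 * q + 5)%N.
Proof.
case: q => // s _.
set L := (X in (X <= _)%N); set R := (X in (_ <= X)%N).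
have e : (L + (2 * s.+1^3 + s.+1^2 + 2 * s) = R)%N by rewrite /L /R; ring.
by rewrite -e leq_addr.
Qed.

Lemma num2 (q : nat) : (1 < q)%N ->
  (2 * (q^6+q^5+2*q^4+2*q^3+2*q^2+q+1) + 4 * (q^6+2*q^5+3*q^4+2*q^3+2*q^2+q+1)
   + (q^2+1)*(q^2+q+1) + 3 * (q^3+q^2+q+1) <= 6 * q ^ 6 + 10 * q ^ 5 + 17 * q ^ 4 + 18 * q ^ 3 + 15 * q ^ 2
                + 9 * q + 5)%N.
Proof.
case: q => [|[|s]] // _.
set L := (X in (X <= _)%N); set R := (X in (_ <= X)%N).
have e : (L + (s * (2 * s.+2^2 + 2 * s.+2 + 3) + 1) = R)%N by rewrite /L /R; ring.
by rewrite -e -addnA leq_addr.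
Qed.

Local Open Scope fset_scope.

Theorem lemma4p1 (F : finFieldType) (C : {fset flag F}) (P1 P2 P3 : sub6 F) :
  indep_flags C -> bounded_mult C -> noncollinear P1 P2 P3 ->
  let q := #|F| in
  (((q + 1) * (6 * q ^ 6 + 10 * q ^ 5 + 17 * q ^ 4 + 15 * q ^ 3 + 15 * q ^ 2
              + 9 * q + 5) < #|` Delta P1 C|)%N ->
    exists f1 f2 f3, good_triple C P1 P2 P3 f1 f2 f3)
  /\
  (forall f1 f2 f3, good_triple C P1 P2 P3 f1 f2 f3 ->
    ((q + 1) * (6 * q ^ 6 + 10 * q ^ 5 + 17 * q ^ 4 + 18 * q ^ 3 + 15 * q ^ 2
                + 9 * q + 5) < #|` Delta P2 C|)%N ->
    exists g1 g2 g3, good_triple C P2 P1 P3 g1 g2 g3 /\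
      (forall f g, f \in [:: f1; f2; f3] -> g \in [:: g1; g2; g3] ->
         (\dim (f.2 :&: g.2)%VS <= 2)%N)).
Proof.
move=> hI hB [/eqP dP1 /eqP dP2 /eqP dP3 d123] q; split.
  move=> hD.
  have hN : (2 * nA F + 4 * nB F + nD F + #|(set0 : {set {vspace 'rV[F]_7}})| <=
     6 * q ^ 6 + 10 * q ^ 5 + 17 * q ^ 4 + 15 * q ^ 3 + 15 * q ^ 2 + 9 * q + 5)%N.
    by rewrite cards0; exact: (num1 (q_gt0 F)).
  have hD' : (q.+1 * (6 * q ^ 6 + 10 * q ^ 5 + 17 * q ^ 4 + 15 * q ^ 3 + 15 * q ^ 2
     + 9 * q + 5) < #|` Delta P1 C|)%N by move: hD; rewrite addn1.
  have [g1 [g2 [g3 [hg _]]]] := @core F C P1 P2 P3 set0 _ hI hB dP1 dP2 dP3 d123 hN hD'.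
  by exists g1, g2, g3.
move=> f1 f2 f3 hf hD.
have [[f1C f2C f3C] _ hQ _] := hf.
have [hfl _] := hI.
have pre : forall f, f \in [:: f1; f2; f3] -> \dim f.2 = 4%N /\ ~~ (P2 <= f.2)%VS.
  move=> f fi; split; last exact: (hQ f fi).1.
  have fC : f \in C by move: fi; rewrite !inE => /or3P[] /eqP ->.
  by have /and3P[_ /eqP -> _] := hfl f fC.
pose GS (f : flag F) := Sset P2 (f.2 + P2) 3.
pose X := GS f1 :|: GS f2 :|: GS f3.
have cG : forall f, f \in [:: f1; f2; f3] -> #|GS f| = (q^3+q^2+q+1)%N.
  move=> f /pre [d4 nP].
  have d5 : \dim (f.2 + P2) = 5%N by rewrite pt_sum // d4.
  exact: (nsubG (addvSr _ _) dP2 d5).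
have cX : (#|X| <= 3 * (q^3+q^2+q+1))%N.
  apply: leq_trans (leq_card_setU _ _) _.
  apply: leq_trans (leq_add (leq_card_setU _ _) (leqnn _)) _.
  rewrite !cG ?inE ?eqxx ?orbT //.
  by rewrite -[3%N]/(1 + 1 + 1)%N !mulnDl mul1n.
have hN : (2 * nA F + 4 * nB F + nD F + #|X| <=
     6 * q ^ 6 + 10 * q ^ 5 + 17 * q ^ 4 + 18 * q ^ 3 + 15 * q ^ 2 + 9 * q + 5)%N.
  apply: leq_trans (num2 (q_gt1 F)); rewrite /nA /nB /nD leq_add2l; exact: cX.
have hD' : (q.+1 * (6 * q ^ 6 + 10 * q ^ 5 + 17 * q ^ 4 + 18 * q ^ 3 + 15 * q ^ 2
     + 9 * q + 5) < #|` Delta P2 C|)%N by move: hD; rewrite addn1.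
have d213 : \dim (P2 + P1 + P3) = 3%N by rewrite (addvC P2 P1).
have [g1 [g2 [g3 [hg hX]]]] := @core F C P2 P1 P3 X _ hI hB dP2 dP1 dP3 d213 hN hD'.
exists g1, g2, g3; split => // f g fi gi.
have [d4 nP] := pre f fi.
have [gX PG] := hX g gi.
have gC : g \in C.
  by have [[h1 h2 h3] _ _ _] := hg; move: gi; rewrite !inE => /or3P[] /eqP ->.
have /and3P[_ /eqP dg ESg] := hfl g gC.
apply: (G_good dP2 nP d4 (subv_trans PG ESg) dg).
move: gX; rewrite /X !in_setU !negb_or => /andP[/andP[h1 h2] h3].
by move: fi h1 h2 h3; rewrite /GS !in_cons in_nil orbF => /or3P[] /eqP ->.
Qed.
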